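(* Let $\mathcal{H}\subseteq\mathcal{F}$ be saturated fusion systems over a finite $p$-group $S$, let $\mathcal{C}$ be a family of subgroups of $S$ closed under $\mathcal{F}$-conjugation and taking overgroups, let $P\in\mathcal{C}$ be fully $\mathcal{F}$-normalized, and put $\mathcal{F}_1=\mathcal{H}$, $\mathcal{F}_2=N_{\mathcal{F}}(P)$, $\mathcal{F}_e=N_{\mathcal{H}}(P)$, $S'=N_S(P)$ and $\Lambda=\{\mathcal{F}_1,\mathcal{F}_2,\mathcal{F}_e\}$. Assume that $\mathcal{F}=\langle\mathcal{H},\operatorname{Aut}_{\mathcal{F}}(P)\rangle_S$. Then $\operatorname{Rep}_{\mathcal{F}}(Q,\Lambda)$ is a tree for every $Q\le S$ that is not $\mathcal{F}$-conjugate to a proper subgroup of $P$. In particular $C_\Lambda(Q):=H_1(\operatorname{Rep}_{\mathcal{F}}(Q,\Lambda);\mathcal{R})=0$ for every such $Q$ and every commutative ring $\mathcal{R}$, and if $P$ is minimal under inclusion in $\mathcal{C}$ then the functor $C_\Lambda$ on $\mathcal{O}_{\mathcal{C}}(\mathcal{F})$ is zero.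
   Context: $\langle\ldots\rangle_S$ is the smallest fusion system over $S$ containing the listed data. $N_{\mathcal{F}}(P)$ is the fusion system over $N_S(P)$ with morphisms those $\mathcal{F}$-morphisms $\varphi:A\to B$ extending to $\hat\varphi:AP\to BP$ in $\mathcal{F}$ with $\hat\varphi(P)=P$. For a fusion system $\mathcal{E}$ over $S_{\mathcal{E}}$, $\operatorname{Rep}_{\mathcal{F}}(Q,\mathcal{E})=\operatorname{Hom}_{\mathcal{F}}(Q,S_{\mathcal{E}})/\sim$ with $\varphi\sim\psi$ iff $\theta\varphi=\psi$ for an $\mathcal{E}$-isomorphism $\theta:\varphi(Q)\to\psi(Q)$. $\operatorname{Rep}_{\mathcal{F}}(Q,\Lambda)$ is the bipartite graph with vertices $\operatorname{Rep}_{\mathcal{F}}(Q,\mathcal{F}_1)\sqcup\operatorname{Rep}_{\mathcal{F}}(Q,\mathcal{F}_2)$ and edges $\operatorname{Rep}_{\mathcal{F}}(Q,\mathcal{F}_e)$, the edge $[\varphi]_{\mathcal{F}_e}$ joining $[\varphi]_{\mathcal{F}_2}$ and $[\iota_{S'}^S\varphi]_{\mathcal{F}_1}$; $Q\mapsto H_1(\operatorname{Rep}_{\mathcal{F}}(Q,\Lambda);\mathcal{R})$ is a functor on $\mathcal{O}_{\mathcal{C}}(\mathcal{F})^{op}$ via precomposition. *)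

(* Defs.v *)
From HB Require Import structures.
From mathcomp Require Import all_boot all_order all_algebra all_fingroup all_solvable.
From Stdlib Require Import ClassicalEpsilon.

Set Implicit Arguments.
Unset Strict Implicit.
Unset Printing Implicit Defensive.

Local Open Scope group_scope.

Definition asb (P : Prop) : bool :=
  if excluded_middle_informative P then true else false.

Section Fusion.
Variable gT : finGroupType.

(* A "fusion predicate": F A B f  means  f ∈ Hom_F(A, B).  Morphisms are
   functions gT -> gT, only their restriction to A matters (axiom fs_ext). *)
Definition fmor := {group gT} -> {group gT} -> (gT -> gT) -> Prop.

Definition inj_hom (A B : {set gT}) (f : gT -> gT) :=
  [/\ {in A &, {morph f : x y / x * y}}, {in A &, injective f}
    & f @: A \subset B].

Definition img (f : gT -> gT) (A : {set gT}) : {group gT} := <<[set f x | x in A]>>%G.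

Definition conj_mor (s : gT) : gT -> gT := fun x => x ^ s.

(* Fusion system over S: a category with objects the subgroups of S,
   Hom_S(A,B) ⊆ Hom_F(A,B) ⊆ Inj(A,B), closed under composition, and every
   morphism is an F-isomorphism onto its image (with F-inverse) followed by
   an inclusion. *)
Record fusion_system (S : {group gT}) (F : fmor) : Prop := {
  fs_sub : forall A B f, F A B f -> A \subset S /\ B \subset S;
  fs_hom : forall A B f, F A B f -> inj_hom A B f;
  fs_ext : forall A B f f', F A B f -> {in A, f =1 f'} -> F A B f';
  fs_conj : forall (A B : {group gT}) s, A \subset S -> B \subset S ->
    s \in S -> A :^ s \subset B -> F A B (conj_mor s);
  fs_comp : forall A B C f g, F A B f -> F B C g -> F A C (g \o f);
  fs_img : forall A B f, F A B f -> F A (img f A) f;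
  fs_inv : forall A B f, F A B f ->
    exists g, F (img f A) A g /\ {in A, cancel f g}
}.

Definition subsystem (E F : fmor) := forall A B f, E A B f -> F A B f.

Definition AutF (F : fmor) (P : {group gT}) : {set {perm gT}} :=
  [set a in Aut P | asb (F P P a)].

Definition AutS (S P : {group gT}) : {set {perm gT}} :=
  [set a in Aut P | asb (exists2 g, g \in 'N_S(P) & {in P, a =1 conj_mor g})].

Definition fully_normalized (S : {group gT}) (F : fmor) (P : {group gT}) :=
  forall f, F P S f -> #|'N_S(img f P)| <= #|'N_S(P)|.

Definition fully_centralized (S : {group gT}) (F : fmor) (P : {group gT}) :=
  forall f, F P S f -> #|'C_S(img f P)| <= #|'C_S(P)|.

Definition Nphi (S : {group gT}) (f : gT -> gT) (P : {group gT}) : {set gT} :=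
  [set x in 'N_S(P) | asb (exists2 y, y \in 'N_S(img f P) &
                              {in P, forall z, f (z ^ x) = (f z) ^ y})].

Definition saturated (p : nat) (S : {group gT}) (F : fmor) :=
  [/\ fusion_system S F,
      forall P : {group gT}, P \subset S -> fully_normalized S F P ->
        fully_centralized S F P /\ p.-Sylow(AutF F P) (AutS S P)
    &
      forall (P : {group gT}) f, F P S f ->
        fully_centralized S F (img f P) ->
        forall N : {group gT}, (N : {set gT}) = Nphi S f P ->
          exists g, F N S g /\ {in P, g =1 f}].

Definition generated_by (S : {group gT}) (X F : fmor) :=
  forall A B f, F A B f <->
    (forall E, fusion_system S E -> subsystem X E -> E A B f).

Definition NF (S : {group gT}) (F : fmor) (P : {group gT}) : fmor :=
  fun A B f =>
    [/\ A \subset 'N_S(P), B \subset 'N_S(P), F A B f &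
        exists fh, [/\ F (A <*> P)%G (B <*> P)%G fh, {in A, fh =1 f}
                     & fh @: P = P]].

Definition mors := {ffun gT -> gT}.

(* the class [phi]_E in Rep_F(Q,E) = Hom_F(Q,T)/~, T = S_E, as a set *)
Definition rep_cls (F : fmor) (Q T : {group gT}) (E : fmor) (phi : mors)
  : {set mors} :=
  [set psi : mors | asb (F Q T psi /\
     exists theta, [/\ E (img phi Q) (img psi Q) theta,
                       theta @: img phi Q = img psi Q
                     & {in Q, forall x, theta (phi x) = psi x}])].

Definition Hom_set (F : fmor) (Q T : {group gT}) : {set mors} :=
  [set phi : mors | asb (F Q T phi)].

Definition RepVtx := ({set mors} + {set mors})%type.

Definition RepV (F F1 F2 : fmor) (Q S S' : {group gT}) : {set RepVtx} :=
  [set (inl (rep_cls F Q S F1 phi) : RepVtx) | phi in Hom_set F Q S] :|: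
  [set (inr (rep_cls F Q S' F2 phi) : RepVtx) | phi in Hom_set F Q S'].

Definition RepE (F Fe : fmor) (Q S' : {group gT}) : {set {set mors}} :=
  [set rep_cls F Q S' Fe phi | phi in Hom_set F Q S'].

Definition rep_of (e : {set mors}) : mors := odflt [ffun x => x] [pick phi in e].

(* the edge [phi]_Fe joins [phi]_F2 and [iota phi]_F1 *)
Definition RepEnd2 (F F2 : fmor) (Q S' : {group gT}) (e : {set mors}) : RepVtx :=
  inr (rep_cls F Q S' F2 (rep_of e)).
Definition RepEnd1 (F F1 : fmor) (Q S : {group gT}) (e : {set mors}) : RepVtx :=
  inl (rep_cls F Q S F1 (rep_of e)).

End Fusion.

Section Graphs.
Variables (V E : finType) (Vs : {set V}) (Es : {set E}) (end1 end2 : E -> V).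

Definition joins (e : E) (u v : V) :=
  ((end1 e == u) && (end2 e == v)) || ((end1 e == v) && (end2 e == u)).

Definition adj : rel V := fun u v => [exists e in Es, joins e u v].

Definition has_cycle :=
  exists n (v : 'I_n -> V) (e : 'I_n -> E),
    [/\ 0 < n, injective v, injective e &
        forall i, e i \in Es /\ joins (e i) (v i) (v (ordS i))].

Definition is_tree :=
  [/\ Vs != set0, {in Vs &, forall u v, connect adj u v} & ~ has_cycle].

(* H_1(graph; R) = 0 : the boundary map R[Es] -> R[Vs] is injective *)
Definition H1_zero (R : comPzRingType) :=
  forall c : E -> R,
    (forall v, v \in Vs ->
       (\sum_(e in Es | end1 e == v) c e - \sum_(e in Es | end2 e == v) c e
        = 0)%R) ->
    forall e, e \in Es -> c e = 0%R.

End Graphs.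

(* Main.v *)
Require Import Defs.
From HB Require Import structures.
From mathcomp Require Import all_boot all_order all_algebra all_fingroup all_solvable.
From Stdlib Require Import Classical ClassicalEpsilon.
Set Implicit Arguments.
Unset Strict Implicit.
Unset Printing Implicit Defensive.
Local Open Scope group_scope.

Lemma asbP (P : Prop) : asb P <-> P.
Proof. by rewrite /asb; case: excluded_middle_informative. Qed.

Lemma hom1 (gT : finGroupType) (A : {group gT}) (f : gT -> gT) :
  {in A &, {morph f : x y / x * y}} -> f 1 = 1.
Proof.
move=> fM; have := fM 1 1 (group1 A) (group1 A); rewrite mulg1 => e.
by apply: (mulgI (f 1)); rewrite mulg1 -e.
Qed.

Lemma img_hom (gT : finGroupType) (A : {group gT}) (f : gT -> gT) :
  {in A &, {morph f : x y / x * y}} -> (img f A : {set gT}) = f @: A.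
Proof.
move=> fM; rewrite /img /=; apply: gen_set_id; apply/group_setP; split.
  by rewrite -(hom1 fM); apply: imset_f.
move=> _ _ /imsetP[x xA ->] /imsetP[y yA ->]; rewrite -fM //.
by apply: imset_f; rewrite groupM.
Qed.

Lemma gen_hom (gT : finGroupType) (A : {group gT}) (f : gT -> gT) :
  {in A &, {morph f : x y / x * y}} -> <<[set f x | x in A]>> = [set f x | x in A].
Proof. exact: img_hom. Qed.

Lemma fs_idm (gT : finGroupType) (S : {group gT}) E (A B : {group gT}) (g : gT -> gT) :
  fusion_system S E -> A \subset B -> B \subset S -> {in A, g =1 id} -> E A B g.
Proof.
move=> fs AB BS gid.
have AS : A \subset S by apply: subset_trans BS.
have := fs_conj fs AS BS (group1 S); rewrite conjsg1 => /(_ AB) h.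
apply: (fs_ext fs h) => x xA; by rewrite /conj_mor conjg1 gid.
Qed.

Lemma fs_restr (gT : finGroupType) (S : {group gT}) E (A B A' B' : {group gT}) f :
  fusion_system S E -> E A B f -> A' \subset A -> B' \subset S -> f @: A' \subset B' ->
  E A' B' f.
Proof.
move=> fs h sA sB sI.
have [AS BS] := fs_sub fs h.
have i1 : E A' A id by apply: (fs_idm fs sA AS).
have h1 := fs_comp fs i1 h.
have h2 : E A' B f by apply: (fs_ext fs h1).
have h3 := fs_img fs h2.
have [_ IS] := fs_sub fs h3.
have i2 : E (img f A') B' id.
  apply: (fs_idm fs) => //; by rewrite /img /= gen_subG.
exact: (fs_ext fs (fs_comp fs h3 i2)).
Qed.

Definition Bad (gT : finGroupType) (S : {group gT}) (F : fmor gT) (P A : {group gT}) :=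
  exists k, F A S k /\ img k A \subset P.

Lemma img_comp_sub (gT : finGroupType) (A B P : {group gT}) (f k : gT -> gT) :
  f @: A \subset B -> img k B \subset P -> img (k \o f) A \subset P.
Proof.
move=> fAB kB; rewrite /img /= gen_subG imset_comp.
apply: subset_trans kB; apply: subset_trans (subset_gen _); exact: imsetS.
Qed.

Lemma Bad_comp (gT : finGroupType) (S : {group gT}) F (P A B : {group gT}) f :
  fusion_system S F -> F A B f -> Bad S F P B -> Bad S F P A.
Proof.
move=> fs h [k [hk kP]]; exists (k \o f); split.
  exact: (fs_comp fs h hk).
by have [_ _ ?] := fs_hom fs h; apply: img_comp_sub kP.
Qed.

Lemma notBad_H (gT : finGroupType) (S : {group gT}) (F H : fmor gT) (P : {group gT}) :
  fusion_system S F -> fusion_system S H -> subsystem H F -> P \subset S ->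
  generated_by S (fun A B f => H A B f \/ [/\ A = P, B = P & F P P f]) F ->
  forall A B f, F A B f -> ~ Bad S F P A -> H A B f.
Proof.
move=> fsF fsH HF PS gen A B f hF.
pose E1 : fmor gT := fun A B f => F A B f /\ (~ Bad S F P A -> H A B f).
have fsE : fusion_system S E1.
  split.
  - by move=> A0 B0 f0 [h _]; exact (fs_sub fsF h).
  - by move=> A0 B0 f0 [h _]; exact (fs_hom fsF h).
  - move=> A0 B0 f0 f0' [h1 h2] e; split; first exact (fs_ext fsF h1 e).
    by move=> nb; exact (fs_ext fsH (h2 nb) e).
  - move=> A0 B0 s AS BS sS sAB; split; first exact (fs_conj fsF AS BS sS sAB).
    by move=> _; exact (fs_conj fsH AS BS sS sAB).
  - move=> A0 B0 C0 f0 g0 [h1 h2] [h3 h4]; split; first exact (fs_comp fsF h1 h3).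
    move=> nb.
    have nbB : ~ Bad S F P B0 by move=> bB; apply: nb; exact: Bad_comp fsF h1 bB.
    exact (fs_comp fsH (h2 nb) (h4 nbB)).
  - move=> A0 B0 f0 [h1 h2]; split; first exact (fs_img fsF h1).
    by move=> nb; exact (fs_img fsH (h2 nb)).
  - move=> A0 B0 f0 [h1 h2].
    case: (classic (Bad S F P A0)) => [bA|nb].
      have [g [hg gK]] := fs_inv fsF h1; exists g; split => //; split => // nb.
      exfalso; apply: nb; exact: Bad_comp fsF hg bA.
    have [g [hg gK]] := fs_inv fsH (h2 nb); exists g; split => //; split => //.
    exact: HF.
have XE : subsystem (fun A B f => H A B f \/ [/\ A = P, B = P & F P P f]) E1.
  move=> A0 B0 f0 [h|[-> -> h]]; first by split => //; exact: HF.
  split => // nb; exfalso; apply: nb; exists id; split.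
    exact (fs_idm fsF PS (subxx S) (fun _ _ => erefl)).
  by rewrite /img /= gen_subG imset_id.
have := (proj1 (gen A B f) hF) E1 fsE XE; case => _; apply.
Qed.

Definition HC (gT : finGroupType) (S : {group gT}) (H : fmor gT) (P A : {group gT}) :=
  exists h, H A S h /\ (img h A : {set gT}) = P.

Lemma card_img (gT : finGroupType) (A B : {group gT}) (f : gT -> gT) :
  inj_hom A B f -> #|img f A| = #|A|.
Proof. by case=> fM fI _; rewrite img_hom // card_in_imset. Qed.

Lemma img_sub (gT : finGroupType) (A B : {group gT}) (f : gT -> gT) :
  inj_hom A B f -> img f A \subset B.
Proof. by case=> _ _ fB; rewrite /img /= gen_subG. Qed.

Lemma hom_sub (gT : finGroupType) (A A' B : {group gT}) (f : gT -> gT) :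
  inj_hom A B f -> A' \subset A -> {in A' &, {morph f : x y / x * y}}.
Proof. by case=> fM _ _ sA x y xA yA; apply: fM; apply: (subsetP sA). Qed.

Lemma img_comp (gT : finGroupType) (A : {group gT}) (f g : gT -> gT) :
  {in A &, {morph f : x y / x * y}} -> img g (img f A) = img (g \o f) A.
Proof. by move=> fM; apply: val_inj; rewrite /= (gen_hom fM) -imset_comp. Qed.

Lemma img_inv (gT : finGroupType) (A : {group gT}) (f g : gT -> gT) :
  {in A &, {morph f : x y / x * y}} -> {in A, cancel f g} -> img g (img f A) = A.
Proof.
move=> fM fK; rewrite img_comp //; apply: val_inj; rewrite /= -[RHS]genGid; congr <<_>>.
by rewrite -[RHS]imset_id; apply: eq_in_imset => x xA /=; rewrite fK.
Qed.

Lemma HCH (gT : finGroupType) (S : {group gT}) (H : fmor gT) (P A B : {group gT}) (g : gT -> gT) :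
  fusion_system S H -> H A B g -> HC S H P A -> HC S H P (img g A).
Proof.
move=> fs hg [h [hh hP]].
have [g' [hg' gK]] := fs_inv fs hg.
exists (h \o g'); split; first exact (fs_comp fs hg' hh).
have [gM _ _] := fs_hom fs hg.
rewrite -img_comp ?(img_inv gM gK) //; by case: (fs_hom fs hg').
Qed.

Lemma HC_Hmap (gT : finGroupType) (S : {group gT}) (H : fmor gT) (P A B : {group gT}) (f : gT -> gT) :
  fusion_system S H -> H A B f -> forall A' : {group gT}, A' \subset A ->
  (HC S H P A' <-> HC S H P (img f A')).
Proof.
move=> fs hf A' sA.
have hom := fs_hom fs hf; have [_ BS] := fs_sub fs hf.
have fA'S : f @: A' \subset S.
  case: hom => _ _ fB; apply: subset_trans BS; apply: subset_trans fB; exact: imsetS.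
have hA' : H A' S f := fs_restr fs hf sA (subxx S) fA'S.
split; first exact: (HCH fs hA').
move=> hc; have [g [hg gK]] := fs_inv fs hA'.
by have := HCH fs hg hc; rewrite img_inv //; exact: hom_sub hom sA.
Qed.

Lemma HCgen (gT : finGroupType) (S : {group gT}) (F H : fmor gT) (P : {group gT}) :
  fusion_system S F -> fusion_system S H -> subsystem H F -> P \subset S ->
  generated_by S (fun A B f => H A B f \/ [/\ A = P, B = P & F P P f]) F ->
  forall A B f, F A B f -> forall A' : {group gT}, A' \subset A ->
  (HC S H P A' <-> HC S H P (img f A')).
Proof.
move=> fsF fsH HF PS gen A B f hF.
pose E2 : fmor gT := fun A B f => F A B f /\
  forall A' : {group gT}, A' \subset A -> (HC S H P A' <-> HC S H P (img f A')).
have fsE : fusion_system S E2.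
  split.
  - by move=> A0 B0 f0 [h _]; exact (fs_sub fsF h).
  - by move=> A0 B0 f0 [h _]; exact (fs_hom fsF h).
  - move=> A0 B0 f0 f0' [h1 h2] e; split; first exact (fs_ext fsF h1 e).
    move=> A' sA; have -> : img f0' A' = img f0 A'.
      apply: val_inj => /=; congr <<_>>; apply: eq_in_imset => x xA.
      by rewrite e // (subsetP sA).
    exact: h2.
  - move=> A0 B0 s AS BS sS sAB; split; first exact (fs_conj fsF AS BS sS sAB).
    exact: (HC_Hmap _ fsH (fs_conj fsH AS BS sS sAB)).
  - move=> A0 B0 C0 f0 g0 [h1 h2] [h3 h4]; split; first exact (fs_comp fsF h1 h3).
    move=> A' sA; have hom := fs_hom fsF h1.
    rewrite -img_comp; last exact: hom_sub hom sA.
    rewrite h2 //; apply: h4; apply: subset_trans (img_sub hom).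
    by rewrite /img /= genS // imsetS.
  - by move=> A0 B0 f0 [h1 h2]; split; first exact (fs_img fsF h1).
  - move=> A0 B0 f0 [h1 h2].
    have [g [hg gK]] := fs_inv fsF h1; exists g; split => //; split => //.
    move=> A'' sA''.
    have homf := fs_hom fsF h1; have homg := fs_hom fsF hg.
    have sA' : img g A'' \subset A0.
      apply: subset_trans (img_sub homg); by rewrite /img /= genS // imsetS.
    have e : img f0 (img g A'') = A''.
      rewrite img_comp; last exact: hom_sub homg sA''.
      apply: val_inj; rewrite /= -[RHS]genGid; congr <<_>>.
      rewrite -[RHS]imset_id; apply: eq_in_imset => y yA /=.
      have : y \in img f0 A0 by apply: (subsetP sA'').
      case: homf => fM _ _; rewrite img_hom // => /imsetP[x xA ->].
      by rewrite gK.
    by have := h2 _ sA'; rewrite e => ->.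
have XE : subsystem (fun A B f => H A B f \/ [/\ A = P, B = P & F P P f]) E2.
  move=> A0 B0 f0 [h|[-> -> h]]; first by split; [exact: HF | exact: HC_Hmap fsH h].
  split => // A' sA.
  have homf := fs_hom fsF h.
  have eP : img f0 P = P.
    apply: val_inj; apply/eqP; by rewrite eqEcard (img_sub homf) (card_img homf) /=.
  have cardHC : forall X : {group gT}, HC S H P X -> #|X| = #|P|.
    by move=> X [h0 [hh0 <-]]; rewrite (card_img (fs_hom fsH hh0)).
  have imgfA' : img f0 A' \subset P.
    apply: subset_trans (img_sub homf); by rewrite /img /= genS // imsetS.
  have fA'S : f0 @: A' \subset S.
    apply: subset_trans PS; apply: subset_trans (img_sub homf).
    by apply: subset_trans (subset_gen _); exact: imsetS.
  have cA' : #|img f0 A'| = #|A'|.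
    exact: card_img (fs_hom fsF (fs_restr fsF h sA (subxx S) fA'S)).
  have key : HC S H P A' \/ HC S H P (img f0 A') -> A' = P.
    move=> hc; apply: val_inj; apply/eqP; rewrite eqEcard sA /=.
    by case: hc => /cardHC <-; rewrite ?cA'.
  split => hc.
    by have eA := key (or_introl hc); move: hc; rewrite eA eP.
  by have eA := key (or_intror hc); move: hc; rewrite eA eP.
by have [_] := (proj1 (gen A B f) hF) E2 fsE XE.
Qed.
Lemma no_cycle_crit (V E : finType) (Es : {set E}) (end1 end2 : E -> V) (sp : E -> bool) :
  (forall e e', end1 e != end2 e') ->
  (forall e e', e \in Es -> e' \in Es -> ~~ sp e -> end1 e = end1 e' -> e = e') ->
  (forall e e', e \in Es -> e' \in Es -> sp e -> sp e' -> end2 e = end2 e' -> e = e') ->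
  ~ has_cycle Es end1 end2.
Proof.
move=> bip L1 L2 [n [v [e [n0 vinj einj H]]]].
have nfix : forall i : 'I_n, ordS i != i.
  move=> i; apply/eqP=> Ei; have [_] := H i; rewrite Ei /joins.
  by case/orP=> /andP[/eqP a /eqP b]; move: (bip (e i) (e i)); rewrite a b eqxx.
have eneq : forall i : 'I_n, e (ordS i) != e i.
  by move=> i; apply/eqP => /einj /eqP; rewrite (negbTE (nfix i)).
have nxt : forall i : 'I_n, (end1 (e (ordS i)) == v (ordS i)) && (end2 (e (ordS i)) == v (ordS (ordS i)))
   || (end1 (e (ordS i)) == v (ordS (ordS i))) && (end2 (e (ordS i)) == v (ordS i)).
  by move=> i; have [_] := H (ordS i).
have stepB : forall i : 'I_n, (end1 (e i) == v (ordS i)) && (end2 (e i) == v i) ->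
   [/\ sp (e i), sp (e (ordS i)) & (end1 (e (ordS i)) == v (ordS i)) && (end2 (e (ordS i)) == v (ordS (ordS i)))].
  move=> i /andP[/eqP a1 /eqP a2].
  have [eEi _] := H i; have [eEs _] := H (ordS i).
  case/orP: (nxt i) => /andP[/eqP b1 /eqP b2]; last first.
    by move: (bip (e i) (e (ordS i))); rewrite a1 b2 eqxx.
  have ee : end1 (e i) = end1 (e (ordS i)) by rewrite a1 b1.
  split; last by rewrite b1 b2 !eqxx.
    apply/negPn/negP => ns; have := L1 _ _ eEi eEs ns ee.
    by move/eqP; rewrite eq_sym (negbTE (eneq i)).
  apply/negPn/negP => ns; have := L1 _ _ eEs eEi ns (esym ee).
  by move/eqP; rewrite (negbTE (eneq i)).
have stepA : forall i : 'I_n, (end1 (e i) == v i) && (end2 (e i) == v (ordS i)) ->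
   end2 (e i) = end2 (e (ordS i)) /\ (end1 (e (ordS i)) == v (ordS (ordS i))) && (end2 (e (ordS i)) == v (ordS i)).
  move=> i /andP[/eqP a1 /eqP a2].
  case/orP: (nxt i) => /andP[/eqP b1 /eqP b2].
    by move: (bip (e (ordS i)) (e i)); rewrite a2 b1 eqxx.
  by split; [rewrite a2 b2 | rewrite b1 b2 !eqxx].
pose i0 : 'I_n := Ordinal n0.
have [i Bi] : exists i : 'I_n, (end1 (e i) == v (ordS i)) && (end2 (e i) == v i).
  have [_] := H i0; case/orP => Ai0; last by exists i0.
  by have [_ Bi] := stepA _ Ai0; exists (ordS i0).
have [_ spj Aj] := stepB _ Bi.
have [ee Bk] := stepA _ Aj.
have [spk _ _] := stepB _ Bk.
have [eEj _] := H (ordS i); have [eEk _] := H (ordS (ordS i)).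
have := L2 _ _ eEj eEk spj spk ee.
by move/eqP; rewrite eq_sym (negbTE (eneq _)).
Qed.

Lemma h1_crit (V E : finType) (Vs : {set V}) (Es : {set E}) (end1 end2 : E -> V) (sp : E -> bool)
  (R : comPzRingType) :
  (forall e e', end1 e != end2 e') ->
  (forall e e', e \in Es -> e' \in Es -> ~~ sp e -> end1 e = end1 e' -> e = e') ->
  (forall e e', e \in Es -> e' \in Es -> sp e -> sp e' -> end2 e = end2 e' -> e = e') ->
  (forall e, e \in Es -> end1 e \in Vs /\ end2 e \in Vs) ->
  H1_zero Vs Es end1 end2 R.
Proof.
move=> bip L1 L2 inVs c Hc.
have c0 : forall e, e \in Es -> ~~ sp e -> c e = 0%R.
  move=> e eE nsp; have := Hc _ (inVs _ eE).1.
  rewrite (bigD1 e) /=; last by rewrite eE eqxx.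
  rewrite big1; last first.
    move=> e' /andP[/andP[e'E /eqP eq] ne].
    by move: ne; rewrite (L1 _ _ eE e'E nsp (esym eq)) eqxx.
  rewrite (big1 _ (fun e' : E => (e' \in Es) && (end2 e' == end1 e))); last first.
    by move=> e' /andP[_ /eqP eq]; move: (bip e e'); rewrite eq eqxx.
  by rewrite GRing.addr0 GRing.subr0.
move=> e eE; case: (boolP (sp e)) => [spe|]; last exact: c0.
have := Hc _ (inVs _ eE).2.
rewrite big1; last first.
  by move=> e' /andP[_ /eqP eq]; move: (bip e' e); rewrite eq eqxx.
rewrite (bigD1 e) /=; last by rewrite eE eqxx.
rewrite big1; last first.
  move=> e' /andP[/andP[e'E /eqP eq] ne].
  case: (boolP (sp e')) => [spe'|nsp]; last exact: c0.
  by move: ne; rewrite (L2 _ _ e'E eE spe' spe eq) eqxx.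
by rewrite GRing.addr0 GRing.sub0r => /eqP; rewrite GRing.oppr_eq0 => /eqP.
Qed.

Lemma conn_crit (V E : finType) (Vs : {set V}) (Es : {set E}) (end1 end2 : E -> V) (w0 : V) :
  (forall u, u \in Vs -> connect (adj Es end1 end2) u w0) ->
  {in Vs &, forall u v, connect (adj Es end1 end2) u v}.
Proof.
move=> H u v uV vV; apply: connect_trans (H _ uV) _.
have sym : connect_sym (adj Es end1 end2).
  apply: sym_connect_sym => x y; rewrite /adj; apply/existsP/existsP => [] [e /andP[eE j]];
  by exists e; rewrite eE /joins orbC.
by rewrite sym; exact: H.
Qed.

Definition Rel (gT : finGroupType) (F : fmor gT) (Q T : {group gT}) (E : fmor gT) (phi psi : gT -> gT) :=
  F Q T psi /\ exists theta, [/\ E (img phi Q) (img psi Q) theta,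
       theta @: img phi Q = img psi Q & {in Q, forall x, theta (phi x) = psi x}].

Lemma mem_rep (gT : finGroupType) (F : fmor gT) (Q T : {group gT}) (E : fmor gT) (phi psi : mors gT) :
  psi \in rep_cls F Q T E phi <-> Rel F Q T E phi psi.
Proof. by rewrite inE; split => /asbP. Qed.

Record GL (gT : finGroupType) (E : fmor gT) (T : {group gT}) : Prop := {
  gl_id : forall A : {group gT}, A \subset T -> E A A (fun x => x);
  gl_comp : forall (A B C : {group gT}) f g, E A B f -> E B C g -> E A C (g \o f);
  gl_inv : forall (A B : {group gT}) f, E A B f -> f @: A = B ->
     exists g, [/\ E B A g, g @: B = A & {in A, cancel f g}];
  gl_hom : forall (A B : {group gT}) f, E A B f -> f @: A \subset B
}.

Lemma Rel_refl (gT : finGroupType) (S : {group gT}) (F E : fmor gT) (Q T : {group gT}) phi :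
  fusion_system S F -> GL E T -> F Q T phi -> Rel F Q T E phi phi.
Proof.
move=> fs gl h; split => //; exists (fun x => x); split => //.
  exact: (gl_id gl (img_sub (fs_hom fs h))).
exact: imset_id.
Qed.

Lemma Rel_trans (gT : finGroupType) (F E : fmor gT) (Q T : {group gT}) phi psi chi :
  GL E T -> Rel F Q T E phi psi -> Rel F Q T E psi chi -> Rel F Q T E phi chi.
Proof.
move=> gl [_ [t1 [h1 i1 v1]]] [hc [t2 [h2 i2 v2]]]; split => //.
exists (t2 \o t1); split; first exact: (gl_comp gl h1 h2).
  by rewrite imset_comp i1.
by move=> x xQ /=; rewrite v1 // v2.
Qed.

Lemma mem_img (gT : finGroupType) (Q : {group gT}) (phi : gT -> gT) x :
  x \in Q -> phi x \in img phi Q.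
Proof. by move=> xQ; rewrite /img /=; apply: mem_gen; apply: imset_f. Qed.

Lemma Rel_sym (gT : finGroupType) (F E : fmor gT) (Q T : {group gT}) phi psi :
  GL E T -> F Q T phi -> Rel F Q T E phi psi -> Rel F Q T E psi phi.
Proof.
move=> gl hp [_ [t [h i v]]]; split => //.
have [g [hg ig gK]] := gl_inv gl h i.
exists g; split => // x xQ; by rewrite -v // gK // mem_img.
Qed.

Lemma class_eq (gT : finGroupType) (F E : fmor gT) (Q T : {group gT}) (phi psi : mors gT) :
  GL E T -> F Q T phi -> Rel F Q T E phi psi -> rep_cls F Q T E phi = rep_cls F Q T E psi.
Proof.
move=> gl hp r; apply/setP => chi; apply/idP/idP => /mem_rep h; apply/mem_rep.
  exact: Rel_trans gl (Rel_sym gl hp r) h.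
exact: Rel_trans gl r h.
Qed.

Lemma GL_fs (gT : finGroupType) (S : {group gT}) (E : fmor gT) :
  fusion_system S E -> GL E S.
Proof.
move=> fs; split.
- by move=> A AS; apply: fs_idm fs (subxx A) AS _.
- by move=> A B C f g h1 h2; exact (fs_comp fs h1 h2).
- move=> A B f h e; have [g [hg gK]] := fs_inv fs h.
  have hom := fs_hom fs h.
  have eB : img f A = B by apply: val_inj; rewrite /= -e; case: hom => fM _ _; rewrite img_hom.
  rewrite eB in hg; exists g; split => //.
  by rewrite -e -imset_comp -[RHS]imset_id; apply: eq_in_imset => x xA /=; rewrite gK.
- by move=> A B f h; case: (fs_hom fs h).
Qed.

Lemma GL_NF (gT : finGroupType) (S : {group gT}) (E : fmor gT) (P : {group gT}) :
  fusion_system S E -> P \subset S -> GL (NF S E P) 'N_S(P)%G.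
Proof.
move=> fs PS.
have NS : 'N_S(P) \subset S by apply: subsetIl.
split.
- move=> A AN; have AS : A \subset S by apply: subset_trans NS.
  split => //; first exact: fs_idm fs (subxx A) AS _.
  exists (fun x => x); split => //; last exact: imset_id.
  by apply: fs_idm fs (subxx _) _ _ => //; rewrite join_subG AS PS.
- move=> A B C f g [AN BN h1 [fh1 [hh1 e1 p1]]] [_ CN h2 [fh2 [hh2 e2 p2]]].
  split => //; first exact (fs_comp fs h1 h2).
  exists (fh2 \o fh1); split; first exact (fs_comp fs hh1 hh2).
    move=> x xA /=; rewrite e1 // e2 //; have [_ _ fB] := fs_hom fs h1.
    by apply: (subsetP fB); apply: imset_f.
  by rewrite imset_comp p1 p2.
- move=> A B f [AN BN h [fh [hh e p]]] eB.
  have [g [hg gK]] := fs_inv fs hh.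
  have homh := fs_hom fs hh; have homg := fs_hom fs hg.
  have [AS _] := fs_sub fs h; have [BS _] := fs_sub fs (fs_img fs h).
  have [_ XS] := fs_sub fs (fs_img fs hh).
  have fhA : fh @: A = B by rewrite -eB; apply: eq_in_imset.
  have sAJ : A \subset A <*> P by apply: joing_subl.
  have sPJ : P \subset A <*> P by apply: joing_subr.
  have gB : g @: B = A.
    rewrite -fhA -imset_comp -[RHS]imset_id; apply: eq_in_imset => x xA /=.
    by rewrite gK // (subsetP sAJ).
  have sBX : B <*> P \subset img fh (A <*> P).
    rewrite join_subG; apply/andP; split.
      by rewrite -fhA /img /=; apply: subset_trans (subset_gen _); exact: imsetS.
    by rewrite -{1}p /img /=; apply: subset_trans (subset_gen _); exact: imsetS.
  have gBA : g @: B \subset A by rewrite gB.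
  exists g; split => //; last by move=> x xA; rewrite -e // gK // (subsetP sAJ).
  split => //; first exact: fs_restr fs hg (subset_trans (joing_subl _ _) sBX) AS gBA.
  have g2 : g @: (B <*> P) \subset A <*> P.
    apply: subset_trans (imsetS _ sBX) _; by case: homg.
  have JS : A <*> P \subset S by rewrite join_subG AS PS.
  exists g; split => //; first exact: (fs_restr fs hg sBX JS g2).
  rewrite -{1}p -imset_comp -[RHS]imset_id; apply: eq_in_imset => x xP /=.
  by rewrite gK // (subsetP sPJ).
- by move=> A B f [_ _ h _]; case: (fs_hom fs h).
Qed.

Lemma hom_onto (gT : finGroupType) (A : {group gT}) (f : gT -> gT) :
  inj_hom A A f -> f @: A = A.
Proof. by case=> _ fI fA; apply/eqP; rewrite eqEcard fA (card_in_imset fI) leqnn. Qed.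

Lemma F_wid (gT : finGroupType) (S : {group gT}) (F : fmor gT) (Q T : {group gT}) f :
  fusion_system S F -> F Q T f -> F Q S f.
Proof.
move=> fs h; have [QS TS] := fs_sub fs h.
have [_ _ fT] := fs_hom fs h.
exact: (fs_restr fs h (subxx Q) (subxx S) (subset_trans fT TS)).
Qed.

Lemma rep_in (gT : finGroupType) (S : {group gT}) (F E : fmor gT) (Q T : {group gT}) e :
  fusion_system S F -> GL E T -> e \in RepE F E Q T ->
  F Q T (rep_of e) /\ e = rep_cls F Q T E (rep_of e).
Proof.
move=> fs gl /imsetP[phi /[!inE] /asbP hp ->].
have phiin : phi \in rep_cls F Q T E phi by apply/mem_rep; exact: Rel_refl fs gl hp.
rewrite /rep_of; case: pickP => [x /mem_rep xin|none]; last by have := none phi; rewrite phiin.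
by have [hx _] := xin; split => //; exact: class_eq gl hp xin.
Qed.

Lemma PP_eq (gT : finGroupType) (P : {group gT}) : (P <*> P)%G = P.
Proof. by apply: val_inj; rewrite /= /joing setUid genGid. Qed.

Lemma part1_lem (gT : finGroupType) (S : {group gT}) (F H : fmor gT) (P Q : {group gT}) :
  fusion_system S F -> fusion_system S H -> subsystem H F -> P \subset S ->
  generated_by S (fun A B f => H A B f \/ [/\ A = P, B = P & F P P f]) F ->
  Q \subset S -> ~ (exists f, F Q S f /\ img f Q \proper P) ->
  is_tree (RepV F H (NF S F P) Q S 'N_S(P)%G) (RepE F (NF S H P) Q 'N_S(P)%G)
       (RepEnd2 F (NF S F P) Q 'N_S(P)%G) (RepEnd1 F H Q S) /\
  forall R : comPzRingType, H1_zero (RepV F H (NF S F P) Q S 'N_S(P)%G) (RepE F (NF S H P) Q 'N_S(P)%G)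
       (RepEnd2 F (NF S F P) Q 'N_S(P)%G) (RepEnd1 F H Q S) R.
Proof.
move=> fsF fsH HF PS gen QS noP.
have glH := GL_fs fsH; have glF2 := GL_NF fsF PS; have glFe := GL_NF fsH PS.
have NS : 'N_S(P) \subset S by apply: subsetIl.
have PN : P \subset 'N_S(P) by rewrite subsetI PS normG.
set T := 'N_S(P)%G.
set Es := RepE F (NF S H P) Q T.
set end1 := RepEnd2 F (NF S F P) Q T.
set end2 := RepEnd1 F H Q S.
set Vs := RepV F H (NF S F P) Q S T.
pose sp := fun e : {set mors gT} => (img (rep_of e) Q : {set gT}) == P.
have bip : forall e e', end1 e != end2 e' by [].
have FeF2 : forall phi psi, Rel F Q T (NF S H P) phi psi -> Rel F Q T (NF S F P) phi psi.
  move=> phi psi [hp [t [[a b c [fh [d e f]]] i v]]]; split => //; exists t; split => //.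
  split => //; first exact: HF; exists fh; split => //; exact: HF.
have FeH : forall phi psi, Rel F Q T (NF S H P) phi psi -> Rel F Q S H phi psi.
  move=> phi psi [hp [t [[a b c _] i v]]]; split; first exact: F_wid fsF hp.
  by exists t.
have inVs : forall e, e \in Es -> end1 e \in Vs /\ end2 e \in Vs.
  move=> e eE; have [he _] := rep_in fsF glFe eE; split.
    rewrite /Vs /RepV inE; apply/orP; right; apply/imsetP; exists (rep_of e) => //.
    by rewrite inE; apply/asbP.
  rewrite /Vs /RepV inE; apply/orP; left; apply/imsetP; exists (rep_of e) => //.
  by rewrite inE; apply/asbP; exact: F_wid fsF he.
have L1 : forall e e', e \in Es -> e' \in Es -> ~~ sp e -> end1 e = end1 e' -> e = e'.
  move=> e e' eE e'E nsp eq.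
  have [he ee] := rep_in fsF glFe eE; have [he' ee'] := rep_in fsF glFe e'E.
  move: eq; rewrite /end1 /RepEnd2 => -[c2].
  have r : Rel F Q T (NF S F P) (rep_of e) (rep_of e').
    apply/mem_rep; rewrite c2; apply/mem_rep; exact: Rel_refl fsF glF2 he'.
  case: r => _ [t [[INT I'NT ht [fh [hfh efh pfh]]] it vt]].
  have nb : ~ Bad S F P (img (rep_of e) Q <*> P)%G.
    move=> [k [hk kP]].
    have homk := fs_hom fsF hk.
    have eX : P = (img (rep_of e) Q <*> P)%G.
      apply/val_inj/eqP; rewrite eqEcard joing_subr /= -(card_img homk).
      exact: subset_leq_card kP.
    have sIP : img (rep_of e) Q \subset P by rewrite eX joing_subl.
    apply: noP; exists (rep_of e); split; first exact: F_wid fsF he.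
    by rewrite properEneq sIP andbT.
  have hH := notBad_H fsF fsH HF PS gen hfh nb.
  have r' : Rel F Q T (NF S H P) (rep_of e) (rep_of e').
    split => //; exists t; split => //; split => //.
    - have I'S : img (rep_of e') Q \subset S by apply: subset_trans I'NT NS.
      have fhI : fh @: img (rep_of e) Q \subset img (rep_of e') Q by rewrite (eq_in_imset efh) it.
      have ht' := fs_restr fsH hH (joing_subl _ _) I'S fhI.
      exact: (fs_ext fsH ht' efh).
    - by exists fh.
  rewrite ee ee'; exact: class_eq glFe he r'.
have L2 : forall e e', e \in Es -> e' \in Es -> sp e -> sp e' -> end2 e = end2 e' -> e = e'.
  move=> e e' eE e'E spe spe' eq.
  have [he ee] := rep_in fsF glFe eE; have [he' ee'] := rep_in fsF glFe e'E.
  move: eq; rewrite /end2 /RepEnd1 => -[c1].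
  have he'S := F_wid fsF he'.
  have r : Rel F Q S H (rep_of e) (rep_of e').
    apply/mem_rep; rewrite c1; apply/mem_rep; exact: Rel_refl fsF glH he'S.
  case: r => _ [t [ht it vt]].
  have eI : img (rep_of e) Q = P := val_inj (eqP spe).
  have eI' : img (rep_of e') Q = P := val_inj (eqP spe').
  have r' : Rel F Q T (NF S H P) (rep_of e) (rep_of e').
    split => //; exists t; split => //.
    rewrite eI eI' in ht it *; split => //; exists t; split => //.
    by rewrite PP_eq.
  rewrite ee ee'; exact: class_eq glFe he r'.
have idF : F Q S [ffun x => x].
  have h0 : F Q S (fun x => x) := fs_idm fsF QS (subxx S) (fun _ _ => erefl).
  apply: (fs_ext fsF h0) => x _; by rewrite ffunE.
have inr_adj : forall phi : mors gT, F Q T phi -> exists2 e, e \in Es &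
    end1 e = inr (rep_cls F Q T (NF S F P) phi) /\ end2 e = inl (rep_cls F Q S H phi).
  move=> phi hp; set e0 := rep_cls F Q T (NF S H P) phi.
  have eE : e0 \in Es by apply/imsetP; exists phi => //; rewrite inE; apply/asbP.
  exists e0 => //; have [hr er] := rep_in fsF glFe eE.
  have : rep_of e0 \in e0 by rewrite {2}er; apply/mem_rep; exact: Rel_refl fsF glFe hr.
  move/mem_rep => rin.
  rewrite /end1 /end2 /RepEnd2 /RepEnd1; split; congr (_ _); symmetry.
    exact: class_eq glF2 hp (FeF2 _ _ rin).
  exact: class_eq glH (F_wid fsF hp) (FeH _ _ rin).
have vert : forall u, u \in Vs ->
    (exists2 phi : mors gT, F Q S phi & u = inl (rep_cls F Q S H phi)) \/
    (exists2 phi : mors gT, F Q T phi & u = inr (rep_cls F Q T (NF S F P) phi)).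
  move=> u; rewrite /Vs /RepV inE => /orP[] /imsetP[phi /[!inE] /asbP hp ->].
    by left; exists phi.
  by right; exists phi.
have joinsP : forall e u v, e \in Es -> end1 e = v -> end2 e = u -> adj Es end1 end2 u v.
  move=> e u v eE h1 h2; apply/existsP; exists e; by rewrite eE /joins h1 h2 !eqxx orbT.
have joinsP' : forall e u v, e \in Es -> end1 e = u -> end2 e = v -> adj Es end1 end2 u v.
  move=> e u v eE h1 h2; apply/existsP; exists e; by rewrite eE /joins h1 h2 !eqxx.
have conn : exists w0, forall u, u \in Vs -> connect (adj Es end1 end2) u w0.
  case: (classic (exists phi0, F Q S phi0 /\ img phi0 Q \subset P)) => [[phi0 [h0 s0]]|nB].
  - have e0I : (img phi0 Q : {set gT}) = P.
      apply/eqP; apply/negPn/negP => ne; apply: noP; exists phi0; split => //.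
      by rewrite properEneq ne s0.
    have eg0 : img phi0 Q = P := val_inj e0I.
    pose psi0 : mors gT := [ffun x => phi0 x].
    have ipsi0 : img psi0 Q = P.
      rewrite -eg0; apply: val_inj => /=; congr <<_>>; apply: eq_in_imset => x _; by rewrite ffunE.
    have hpsi0 : F Q T psi0.
      have p0T : phi0 @: Q \subset T.
        apply: subset_trans PN; rewrite -e0I; exact: subset_gen.
      have := fs_restr fsF h0 (subxx Q) NS p0T => h0T.
      apply: (fs_ext fsF h0T) => x _; by rewrite ffunE.
    have HCP : HC S H P P.
      exists (fun x => x); split; first exact: (fs_idm fsH PS (subxx S) (fun _ _ => erefl)).
      by rewrite /img /= imset_id genGid.
    have HCQ : HC S H P Q by apply/(HCgen fsF fsH HF PS gen h0 (subxx Q)); rewrite eg0.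
    exists (inr (rep_cls F Q T (NF S F P) psi0)).
    have inlconn : forall phi : mors gT, F Q S phi ->
        connect (adj Es end1 end2) (inl (rep_cls F Q S H phi)) (inr (rep_cls F Q T (NF S F P) psi0)).
      move=> phi hp.
      have [h [hh hP]] := (HCgen fsF fsH HF PS gen hp (subxx Q)).1 HCQ.
      pose psi : mors gT := [ffun x => h (phi x)].
      have hpI := fs_img fsF hp.
      have hcomp := fs_comp fsF hpI (HF _ _ _ hh).
      have [phiM _ _] := fs_hom fsF hp.
      have [hM _ _] := fs_hom fsH hh.
      have imgpsi : img psi Q = P.
        have -> : img psi Q = img (h \o phi) Q.
          by apply: val_inj => /=; congr <<_>>; apply: eq_in_imset => x _; rewrite ffunE.
        by rewrite -img_comp //; apply: val_inj.
      have hpsiS : F Q S psi by apply: (fs_ext fsF hcomp) => x _; rewrite ffunE.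
      have hpsiT : F Q T psi.
        have sT : psi @: Q \subset T.
          apply: subset_trans PN; rewrite -imgpsi; exact: subset_gen.
        exact: (fs_restr fsF hpsiS (subxx Q) NS sT).
      have r1 : Rel F Q S H phi psi.
        split => //; exists h; split.
        - rewrite imgpsi; apply: (fs_restr fsH hh (subxx _) PS).
          by rewrite -hP; exact: subset_gen.
        - by rewrite imgpsi -hP (img_hom hM).
        - by move=> x _; rewrite ffunE.
      have eqH := class_eq glH hp r1.
      have [g [hg gK]] := fs_inv fsF hpsi0.
      rewrite ipsi0 in hg.
      have hpsiP := fs_img fsF hpsiT; rewrite imgpsi in hpsiP.
      have ht := fs_comp fsF hg hpsiP.
      have ont := hom_onto (fs_hom fsF ht).
      have r2 : Rel F Q T (NF S F P) psi0 psi.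
        split => //; exists (psi \o g); rewrite ipsi0 imgpsi; split => //.
        - split => //; exists (psi \o g); split => //; by rewrite PP_eq.
        - by move=> x xQ /=; rewrite gK.
      have eqF2 := class_eq glF2 hpsi0 r2.
      have [e eE [h1 h2]] := inr_adj psi hpsiT.
      apply: connect1; apply: (joinsP e) => //; by rewrite ?h1 ?h2 ?eqH ?eqF2.
    move=> u /vert [[phi hp ->]|[phi hp ->]]; first exact: inlconn.
    have [e eE [h1 h2]] := inr_adj phi hp.
    apply: connect_trans (inlconn _ (F_wid fsF hp)).
    by apply: connect1; apply: (joinsP' e).
  - exists (inl (rep_cls F Q S H [ffun x => x])).
    have inleq : forall phi : mors gT, F Q S phi ->
        rep_cls F Q S H phi = rep_cls F Q S H [ffun x => x].
      move=> phi hp.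
      have hH : H Q S phi := notBad_H fsF fsH HF PS gen hp nB.
      have eQ : img [ffun x : gT => x] Q = Q.
        apply: val_inj => /=; rewrite -[RHS]genGid; congr <<_>>.
        by rewrite -[RHS]imset_id; apply: eq_in_imset => x _; rewrite ffunE.
      have [phiM _ _] := fs_hom fsH hH.
      have r : Rel F Q S H [ffun x => x] phi.
        split => //; exists phi; rewrite eQ; split.
        - exact: (fs_img fsH hH).
        - by rewrite img_hom.
        - by move=> x _; rewrite ffunE.
      symmetry; exact: class_eq glH idF r.
    move=> u /vert [[phi hp ->]|[phi hp ->]]; first by rewrite inleq.
    have [e eE [h1 h2]] := inr_adj phi hp.
    apply: connect1; apply: (joinsP' e) => //; by rewrite h2 (inleq _ (F_wid fsF hp)).
split; last by move=> R; exact: h1_crit bip L1 L2 inVs.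
split.
- apply/set0Pn; exists (inl (rep_cls F Q S H [ffun x => x])).
  rewrite /Vs /RepV inE; apply/orP; left; apply/imsetP; exists [ffun x => x] => //.
  by rewrite inE; apply/asbP.
- by have [w0 hw] := conn; exact: conn_crit hw.
- exact: no_cycle_crit bip L1 L2.
Qed.

Unset Implicit Arguments.
Set Strict Implicit.

Theorem corollary4p3 (gT : finGroupType) (p : nat) (S : {group gT})
    (F H : fmor gT) (C : {group gT} -> Prop) (P : {group gT}) :
  prime p -> p.-group S ->
  saturated p S F -> saturated p S H -> subsystem H F ->
  (forall Q : {group gT}, C Q -> Q \subset S) ->
  (forall (Q : {group gT}) f, C Q -> F Q S f -> C (img f Q)) ->
  (forall Q R : {group gT}, C Q -> Q \subset R -> R \subset S -> C R) ->
  C P -> P \subset S -> fully_normalized S F P ->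
  generated_by S (fun A B f => H A B f \/ [/\ A = P, B = P & F P P f]) F ->
  let S' := 'N_S(P)%G in
  let F1 := H in
  let F2 := NF S F P in
  let Fe := NF S H P in
  let V := RepV F F1 F2 in
  let E Q := RepE F Fe Q S' in
  let e1 Q := RepEnd1 F F1 Q S in
  let e2 Q := RepEnd2 F F2 Q S' in
  (forall Q : {group gT}, Q \subset S ->
     ~ (exists f, F Q S f /\ img f Q \proper P) ->
     is_tree (V Q S S') (E Q) (e2 Q) (e1 Q) /\
     forall R : comPzRingType, H1_zero (V Q S S') (E Q) (e2 Q) (e1 Q) R) /\
  ((forall Q : {group gT}, C Q -> Q \subset P -> (Q : {set gT}) = P) ->
     forall Q : {group gT}, C Q ->
     forall R : comPzRingType, H1_zero (V Q S S') (E Q) (e2 Q) (e1 Q) R).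
Proof.
move=> pr pS satF satH HF Csub Cconj Cover CP PS fnP gen.
cbv beta zeta.
have [fsF _ _] := satF; have [fsH _ _] := satH.
have glH := GL_fs fsH; have glF2 := GL_NF fsF PS; have glFe := GL_NF fsH PS.
have NS : 'N_S(P) \subset S by apply: subsetIl.
have PN : P \subset 'N_S(P) by rewrite subsetI PS normG.
have part1 : forall Q : {group gT}, Q \subset S ->
     ~ (exists f, F Q S f /\ img f Q \proper P) ->
     is_tree (RepV F H (NF S F P) Q S 'N_S(P)%G) (RepE F (NF S H P) Q 'N_S(P)%G)
       (RepEnd2 F (NF S F P) Q 'N_S(P)%G) (RepEnd1 F H Q S) /\
     forall R : comPzRingType, H1_zero (RepV F H (NF S F P) Q S 'N_S(P)%G) (RepE F (NF S H P) Q 'N_S(P)%G)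
       (RepEnd2 F (NF S F P) Q 'N_S(P)%G) (RepEnd1 F H Q S) R.
  by move=> Q QS noP; exact: (part1_lem fsF fsH HF PS gen QS noP).
split; first exact: part1.
move=> minP Q CQ R; have QS := Csub _ CQ.
have noP : ~ (exists f, F Q S f /\ img f Q \proper P).
  move=> [f [hf pf]].
  have Cf := Cconj _ _ CQ hf.
  have := minP _ Cf (proper_sub pf); move: pf; rewrite properEneq => /andP[/eqP ne _] e.
  exact: ne e.
exact: (part1 Q QS noP).2 R.
Qed.
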